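(* Let $(b_n)$ be real numbers with $0 \le b_n < \ln n$, $b_n = (1 - o(1)) \ln n$, and $\ln n - b_n \to \infty$ as $n \to \infty$. Then there exists a sequence $\varepsilon_n \to 0$ such that for all sufficiently large $n$, \[ \mathbb{P}(F_n^- \le b_n) \le (\ln n)^{d-1} \exp\!\left[-\exp\!\left\{(1+\varepsilon_n)\tfrac12(\ln n - b_n)\right\}\right]. \]
   Context: Fix an integer $d \ge 1$. Let $X^{(1)}, X^{(2)}, \dots$ be i.i.d. random vectors in $\mathbb{R}^d$ with independent Exponential$(1)$ coordinates. For $x,y \in \mathbb{R}^d$ write $x \prec y$ if $x_j<y_j$ for all $j$, $x \le y$ if $x_j \le y_j$ for all $j$, and $x_+ := \sum_j x_j$. The record-setting region at time $n$ is $\mathrm{RS}_n := \{x \in \mathbb{R}^d : 0 \le x,\ x \not\prec X^{(i)} \text{ for all } 1 \le i \le n\}$, and its frontier $F_n$ is the topological boundary of $\mathrm{RS}_n$ relative to $[0,\infty)^d$. Define $F_n^- := \min\{x_+ : x \in F_n\}$. *)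

(* Defs.v *)
From HB Require Import structures.
From mathcomp Require Import all_boot all_order all_algebra.
From mathcomp Require Import all_classical all_reals all_analysis.
Set Implicit Arguments. Unset Strict Implicit. Unset Printing Implicit Defensive.
Import Order.TTheory GRing.Theory Num.Theory.
Import numFieldNormedType.Exports.
Local Open Scope classical_set_scope.
Local Open Scope ring_scope.

Section RecordFrontier.
Variable R : realType.
Variable d : nat.

Definition orthant : set 'rV[R]_d := [set x | forall j, 0 <= x ord0 j].

Definition strict_dom (x y : 'rV[R]_d) : Prop := forall j, x ord0 j < y ord0 j.

(* record-setting region RS_n for the observations Xs 0, ..., Xs (n-1)
   (i.e. X^(1), ..., X^(n) in the paper's 1-based indexing) *)
Definition RS (Xs : nat -> 'rV[R]_d) (n : nat) : set 'rV[R]_d :=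
  [set x | orthant x /\ forall i, (i < n)%N -> ~ strict_dom x (Xs i)].

(* boundary of A relative to the subspace Q = [0,oo)^d:
   cl_Q(A) \cap cl_Q(Q \ A), with cl_Q(B) = closure B \cap Q *)
Definition rel_boundary (Q A : set 'rV[R]_d) : set 'rV[R]_d :=
  Q `&` closure (Q `&` A) `&` closure (Q `\` A).

Definition frontier (Xs : nat -> 'rV[R]_d) (n : nat) : set 'rV[R]_d :=
  rel_boundary orthant (RS Xs n).

Definition coord_sum (x : 'rV[R]_d) : R := \sum_(j < d) x ord0 j.

(* F_n^- = min { x_+ : x in F_n } (written as an infimum; the minimum
   is attained since F_n is compact and nonempty for n >= 1 a.s.) *)
Definition Fminus (Xs : nat -> 'rV[R]_d) (n : nat) : R :=
  inf [set coord_sum x | x in frontier Xs n].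

End RecordFrontier.

(* the random vector X^(i+1) at outcome w *)
Definition rvec (R : realType) (T : Type) (d : nat)
  (X : nat -> 'I_d -> T -> R) (i : nat) (w : T) : 'rV[R]_d :=
  \row_(j < d) X i j w.

Definition mutually_independent (R : realType) (dT : measure_display)
  (T : measurableType dT) (P : probability T R) (d : nat)
  (X : nat -> 'I_d -> T -> R) : Prop :=
  forall (s : seq (nat * 'I_d)) (B : nat -> 'I_d -> set R),
    uniq s -> (forall i j, measurable (B i j)) ->
    P (\big[setI/setT]_(k <- s) (X k.1 k.2 @^-1` B k.1 k.2)) =
    (\prod_(k <- s) P (X k.1 k.2 @^-1` B k.1 k.2))%E.

(* Main.v *)
Require Import Defs.
From HB Require Import structures.
From mathcomp Require Import all_boot all_order all_algebra.
From mathcomp Require Import all_classical all_reals all_analysis.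
From mathcomp Require Import ring lra.
Import Order.TTheory GRing.Theory Num.Theory.
Import numFieldNormedType.Exports.
Local Open Scope classical_set_scope.
Local Open Scope ring_scope.

Section Meas.
Context {R : realType} {dT : measure_display} {T : measurableType dT}.
Implicit Types f g : T -> R.

Lemma mset_le f g : measurable_fun setT f -> measurable_fun setT g ->
  measurable [set w | f w <= g w].
Proof.
move=> mf mg; have := measurable_realfun.measurable_fun_ler mf mg measurableT (Y := [set true]) I.
by rewrite setTI; congr measurable; apply/seteqP; split => w /=.
Qed.

Lemma mset_lt f g : measurable_fun setT f -> measurable_fun setT g ->
  measurable [set w | f w < g w].
Proof.
move=> mf mg; have := measurable_realfun.measurable_fun_ltr mf mg measurableT (Y := [set true]) I.
by rewrite setTI; congr measurable; apply/seteqP; split => w /=.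
Qed.

Lemma mset_forallF {I : finType} (P : I -> set T) : (forall i, measurable (P i)) ->
  measurable [set w | forall i, P i w].
Proof.
move=> mP; have -> : [set w | forall i, P i w] = \bigcap_(i in [set: I]) P i.
  by apply/seteqP; split => w /= H i //; apply: H.
by apply: fin_bigcap_measurable => //; exact: finite_finset.
Qed.

Lemma mset_existsF {I : finType} (P : I -> set T) : (forall i, measurable (P i)) ->
  measurable [set w | exists i, P i w].
Proof.
move=> mP; have -> : [set w | exists i, P i w] = \bigcup_(i in [set: I]) P i.
  by apply/seteqP; split => w /= [i H]; exists i.
by apply: fin_bigcup_measurable => //; exact: finite_finset.
Qed.

Lemma mset_forallN {n} (P : nat -> set T) : (forall i, measurable (P i)) ->
  measurable [set w | forall i, (i < n)%N -> P i w].
Proof.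
move=> mP; elim: n => [|n IH].
  by have -> : [set w | forall i, (i < 0)%N -> P i w] = setT;
    [apply/seteqP; split => w //= _ i|exact: measurableT].
have -> : [set w | forall i, (i < n.+1)%N -> P i w] =
  [set w | forall i, (i < n)%N -> P i w] `&` P n.
  apply/seteqP; split => w /=.
    by move=> H; split => [i il|]; apply: H => //; apply: ltnW.
  move=> [H1 H2] i; rewrite ltnS leq_eqVlt => /orP[/eqP ->|]//; exact: H1.
exact: measurableI.
Qed.

Lemma mset_existsN {n} (P : nat -> set T) : (forall i, measurable (P i)) ->
  measurable [set w | exists i, (i < n)%N /\ P i w].
Proof.
move=> mP; elim: n => [|n IH].
  by have -> : [set w | exists i, (i < 0)%N /\ P i w] = set0;
    [apply/seteqP; split => w //= [i []]|exact: measurable0].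
have -> : [set w | exists i, (i < n.+1)%N /\ P i w] =
  [set w | exists i, (i < n)%N /\ P i w] `|` P n.
  apply/seteqP; split => w /=.
    move=> [i []]; rewrite ltnS leq_eqVlt => /orP[/eqP ->|]; first by right.
    by move=> il Pi; left; exists i.
  by move=> [[i [il Pi]]|Pn]; [exists i; split => //; apply: ltnW|exists n].
exact: measurableU.
Qed.

Lemma mset_not (P : set T) : measurable P -> measurable [set w | ~ P w].
Proof. by move=> mP; have := measurableC mP. Qed.

Lemma mset_and (P Q : set T) : measurable P -> measurable Q ->
  measurable [set w | P w /\ Q w].
Proof. exact: measurableI. Qed.

Lemma mset_or (P Q : set T) : measurable P -> measurable Q ->
  measurable [set w | P w \/ Q w].
Proof. exact: measurableU. Qed.

End Meas.
Section Geo.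
Variable R : realType.
Variable d : nat.
Implicit Types x y z : 'rV[R]_d.

Lemma ball_rV x e y : ball x e y -> forall j, `|x ord0 j - y ord0 j| < e.
Proof. by move=> [_ H] j; have := H ord0 j. Qed.

Lemma rV_ball x e y : 0 < e -> (forall j, `|x ord0 j - y ord0 j| < e) -> ball x e y.
Proof. by move=> e0 H; split => // i j; rewrite (ord1 i); exact: H. Qed.

Lemma closure_ball (A : set 'rV[R]_d) x : closure A x ->
  forall e, 0 < e -> exists z, A z /\ forall j, `|x ord0 j - z ord0 j| < e.
Proof.
move=> H e e0; have [z [Az bz]] := H _ (nbhsx_ballx x e e0).
by exists z; split => //; exact: ball_rV.
Qed.


Lemma closed_le (a : 'I_d -> R) : closed [set y : 'rV[R]_d | forall j, y ord0 j <= a j].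
Proof.
move=> y /closure_ball H j; rewrite leNgt; apply/negP => lt.
have [z [Hz Hb]] := H (y ord0 j - a j) ltac:(by rewrite subr_gt0).
have := Hz j; have := Hb j; have := ler_norm (y ord0 j - z ord0 j); lra.
Qed.

Lemma closed_C (X : nat -> 'rV[R]_d) m :
  closed [set y : 'rV[R]_d | exists i, (i < m)%N /\ strict_dom 0 (X i) /\
     forall j, y ord0 j <= X i ord0 j].
Proof.
elim: m => [|m IH].
  rewrite (_ : [set y | _] = set0); first exact: closed0.
  by apply/seteqP; split => y //= [i []].
rewrite (_ : [set y | _] = [set y : 'rV[R]_d | exists i, (i < m)%N /\ strict_dom 0 (X i) /\
     forall j, y ord0 j <= X i ord0 j] `|` [set y | strict_dom 0 (X m) /\
     forall j, y ord0 j <= X m ord0 j]).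
  have HD : closed [set y : 'rV[R]_d | strict_dom 0 (X m) /\ forall j, y ord0 j <= X m ord0 j]; last exact: closedU IH HD.
  case: (pselect (strict_dom 0 (X m))) => h.
    have -> : [set y : 'rV[R]_d | strict_dom 0 (X m) /\ forall j, y ord0 j <= X m ord0 j]
       = [set y : 'rV[R]_d | forall j, y ord0 j <= X m ord0 j].
      by apply/seteqP; split => y /= => [[]|] // H.
    exact: closed_le.
  have -> : [set y : 'rV[R]_d | strict_dom 0 (X m) /\ forall j, y ord0 j <= X m ord0 j]
     = set0; last exact: closed0.
  by apply/seteqP; split => y //= [].
apply/seteqP; split => y /=.
  move=> [i [im [h1 h2]]]; rewrite ltnS leq_eqVlt in im.
  case/orP: im => [/eqP E|im]; [right; rewrite -E|left; exists i] => //.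
case=> [[i [im h]]|h]; first by exists i; split => //; apply: ltnW.
by exists m; split.
Qed.

Lemma closure_RS (X : nat -> 'rV[R]_d) n x :
  closure (@orthant R d `&` RS X n) x -> RS X n x.
Proof.
move=> /closure_ball H; split.
  move=> j; rewrite leNgt; apply/negP => lt.
  have [z [[_ [Hz _]] Hb]] := H (- x ord0 j) ltac:(by rewrite oppr_gt0).
  have := Hz j; have := Hb j; rewrite distrC; have := ler_norm (z ord0 j - x ord0 j); lra.
move=> i ilt xX.
pose e := \big[Order.min/1]_j (X i ord0 j - x ord0 j).
have e0 : 0 < e by apply: lt_bigmin => // j _; rewrite subr_gt0.
have [z [[_ [_ Hz]] Hb]] := H e e0.
apply: (Hz i ilt) => j.
have := Hb j; have := @bigmin_le _ _ _ 1 j (fun j => X i ord0 j - x ord0 j).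
rewrite -/e; have := ler_norm (z ord0 j - x ord0 j); rewrite distrC; lra.
Qed.

Lemma closure_nRS (X : nat -> 'rV[R]_d) n x :
  closure (@orthant R d `\` RS X n) x -> exists i, (i < n)%N /\ strict_dom 0 (X i) /\
     forall j, x ord0 j <= X i ord0 j.
Proof.
move=> H; apply: (closed_C X n); apply: (closureS _ H) => y [Oy nRS].
have [i [ilt yX]] : exists i, (i < n)%N /\ strict_dom y (X i).
  by apply: contrapT => K; apply: nRS; split=> // i ilt yX; apply: K; exists i.
exists i; split => //; split => j; last exact/ltW.
by rewrite mxE; apply: le_lt_trans (Oy j) (yX j).
Qed.

Lemma nRS_closure (X : nat -> 'rV[R]_d) n x : @orthant R d x ->
  (exists i, (i < n)%N /\ strict_dom 0 (X i) /\ forall j, x ord0 j <= X i ord0 j) ->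
  closure (@orthant R d `\` RS X n) x.
Proof.
move=> Ox [i [ilt [X0 xX]]] B /nbhs_ballP [e /= e0 sB].
pose y : 'rV[R]_d := \row_j Num.max 0 (x ord0 j - e / 2).
have yO : @orthant R d y by move=> j; rewrite mxE le_max lexx.
have yX : strict_dom y (X i).
  move=> j; rewrite mxE gt_max; have := X0 j; rewrite mxE => h; rewrite h /=.
  have := xX j; lra.
exists y; split; last first.
  apply: sB; apply: rV_ball => // j; rewrite mxE.
  have := Ox j; case: (lerP 0 (x ord0 j - e / 2)) => h hx.
    rewrite ger0_norm; lra.
  rewrite subr0 ger0_norm //; lra.
by split => // -[_ H]; exact: (H i ilt yX).
Qed.

Definition Fchar (X : nat -> 'rV[R]_d) n x := RS X n x /\
  exists i, (i < n)%N /\ strict_dom 0 (X i) /\ forall j, x ord0 j <= X i ord0 j.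

Lemma frontierE X n x : frontier X n x <-> Fchar X n x.
Proof.
split.
  by move=> [[Ox c1] c2]; split; [exact: closure_RS|exact: closure_nRS].
move=> [RSx ex]; have Ox : @orthant R d x by case: RSx.
split; first split.
- exact: Ox.
- exact: subset_closure.
- exact: nRS_closure.
Qed.


Definition oval (Xs : nat -> 'rV[R]_d) n j (o : option 'I_n) : R :=
  if o is Some k then Xs k ord0 j else 0.
Arguments oval Xs {n} j o.

Definition candv (Xs : nat -> 'rV[R]_d) n (phi : {ffun 'I_d -> option 'I_n}) : 'rV[R]_d :=
  \row_j oval Xs j (phi j).
Arguments candv Xs {n} phi.

Lemma round_coord (Xs : nat -> 'rV[R]_d) n j (x : R) : 0 <= x ->
  exists o1 : option 'I_n, 0 <= oval Xs j o1 /\ oval Xs j o1 <= x /\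
    forall k : 'I_n, Xs k ord0 j <= x -> Xs k ord0 j <= oval Xs j o1.
Proof.
move=> x0.
suff H : forall m, (m <= n)%N -> exists o1 : option 'I_n, 0 <= oval Xs j o1 /\ oval Xs j o1 <= x /\
    forall k : 'I_n, (k < m)%N -> Xs k ord0 j <= x -> Xs k ord0 j <= oval Xs j o1.
  move: (H n (leqnn n)) => [ v1 [h1 [h2 h3]]].
  by exists v1; split => //; split => // k; apply: h3.
elim => [_|m IH mn]; first by exists None; split => //=; split => // k.
have [ v1 [h1 [h2 h3]]] := IH (ltnW mn).
pose k0 : 'I_n := Ordinal mn.
case: (boolP ((Xs m ord0 j <= x) && (oval Xs j v1 < Xs m ord0 j))) => [/andP [c1 c2]|c].
  exists (Some k0); rewrite /= ; split; first by apply: le_trans (ltW c2).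
  split => // k; rewrite ltnS leq_eqVlt => /orP[/eqP E|km] hk.
    by have -> : k = k0 by apply: val_inj.
  by apply: le_trans (h3 k km hk) (ltW c2).
exists v1; split => //; split => // k; rewrite ltnS leq_eqVlt => /orP[/eqP E|km] hk; last exact: h3.
have E' : k = k0 by apply: val_inj.
move: hk c; rewrite E' /= => hk; rewrite hk /= -leNgt; done.
Qed.

Lemma round (Xs : nat -> 'rV[R]_d) n x : Fchar Xs n x ->
  exists phi : {ffun 'I_d -> option 'I_n}, Fchar Xs n (candv Xs phi) /\ forall j, candv Xs phi ord0 j <= x ord0 j.
Proof.
move=> [[Ox nX] [i [il [X0 xX]]]].
have H : forall j, exists o1 : option 'I_n, 0 <= oval Xs j o1 /\ oval Xs j o1 <= x ord0 j /\
    forall k : 'I_n, Xs k ord0 j <= x ord0 j -> Xs k ord0 j <= oval Xs j o1.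
  by move=> j; apply: round_coord.
have [f Hf] := fin_all_exists H.
exists [ffun j => f j].
have cE : forall j, candv Xs [ffun j => f j] ord0 j = oval Xs j (f j) by move=> j; rewrite mxE ffunE.
have cx : forall j, candv Xs [ffun j => f j] ord0 j <= x ord0 j.
  by move=> j; rewrite cE; have [_ []] := Hf j.
split => //; split; last first.
  by exists i; split => //; split => // j; apply: le_trans (cx j) (xX j).
split; first by move=> j; rewrite cE; have [] := Hf j.
move=> k kn cX; apply: (nX k kn) => j.
have := cX j; rewrite cE => h; rewrite ltNge; apply/negP => hk.
have [_ [_ h3]] := Hf j; have := h3 (Ordinal kn) hk; rewrite /=; lra.
Qed.


Lemma Fminus_le (Xs : nat -> 'rV[R]_d) n c : (Fminus Xs n <= c) <->
  ((exists phi : {ffun 'I_d -> option 'I_n}, Fchar Xs n (candv Xs phi) /\ coord_sum (candv Xs phi) <= c)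
   \/ ((forall phi : {ffun 'I_d -> option 'I_n}, ~ Fchar Xs n (candv Xs phi)) /\ 0 <= c)).
Proof.
rewrite /Fminus; set S := [set coord_sum x | x in frontier Xs n].
have lbS : lbound S 0.
  move=> _ [x /frontierE [[Ox _] _] <-]; rewrite /coord_sum; apply: sumr_ge0 => j _; exact: Ox.
have hlS : has_lbound S by exists 0.
case: (pselect (exists x, Fchar Xs n x)) => [[x Fx]|nF].
  have [phi0 [Fphi0 _]] := @round Xs n x Fx.
  split; last first.
    case=> [[phi [Fphi sc]]|[H _]]; last by case: (H phi0).
    apply: le_trans sc; apply: ge_inf => //; exists (candv Xs phi) => //; exact/frontierE.
  move=> H; left; apply: contrapT => K.
  have K' : forall phi : {ffun 'I_d -> option 'I_n}, Fchar Xs n (candv Xs phi) -> c < coord_sum (candv Xs phi).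
    by move=> phi Fp; rewrite ltNge; apply/negP => h; apply: K; exists phi.
  pose m : R := \big[Order.min/(c+1)]_(phi : {ffun 'I_d -> option 'I_n} | `[< Fchar Xs n (candv Xs phi) >]) coord_sum (candv Xs phi).
  have cm : c < m.
    apply: lt_bigmin; first lra.
    by move=> phi /asboolP; exact: K'.
  have : m <= inf S.
    apply: lb_le_inf; first by exists (coord_sum x); exists x => //; exact/frontierE.
    move=> _ [z /frontierE Fz <-].
    have [phi [Fp pz]] := @round Xs n z Fz.
    apply: (@le_trans _ _ (coord_sum (candv Xs phi))).
      by apply: bigmin_le_cond; apply/asboolP.
    by apply: ler_sum => j _; exact: pz.
  lra.
have S0 : S = set0.
  apply/seteqP; split => // y [z Fz _]; apply: nF; exists z; exact/frontierE.
rewrite S0 inf0; split.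
  by move=> c0; right; split => // phi Fp; apply: nF; exists (candv Xs phi).
by case=> [[phi [Fp _]]|[]//]; case: nF; exists (candv Xs phi).
Qed.

End Geo.
Arguments oval {R d} Xs {n} j o.
Arguments candv {R d} Xs {n} phi.
Arguments Fchar {R d} X n x.
Arguments Fminus_le {R d} Xs n c.
Arguments frontierE {R d} X n x.
Arguments round {R d} Xs n x.
Arguments closure_ball {R d} A x.

Section EventMeas.
Context {R : realType} {dT : measure_display} {T : measurableType dT} {d : nat}.
Variable X : nat -> 'I_d -> T -> R.
Hypothesis Xmeas : forall i j, measurable_fun setT (X i j).

Definition Xs w : nat -> 'rV[R]_d := rvec X ^~ w.

Lemma XsE w i j : Xs w i ord0 j = X i j w.
Proof. by rewrite /Xs /rvec mxE. Qed.

Definition fc n (phi : {ffun 'I_d -> option 'I_n}) j (w : T) : R :=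
  if phi j is Some k then X k j w else 0.
Arguments fc {n} phi j w.

Lemma fc_meas n (phi : {ffun 'I_d -> option 'I_n}) j : measurable_fun setT (fc phi j).
Proof. by rewrite /fc; case: (phi j) => [k|]; [exact: Xmeas|exact: measurable_cst]. Qed.

Lemma candE n (phi : {ffun 'I_d -> option 'I_n}) w j : candv (Xs w) phi ord0 j = fc phi j w.
Proof. by rewrite /candv mxE /oval /fc; case: (phi j) => // k; rewrite XsE. Qed.

Lemma Fset_meas n (phi : {ffun 'I_d -> option 'I_n}) :
  measurable [set w | Fchar (Xs w) n (candv (Xs w) phi)].
Proof.
have -> : [set w | Fchar (Xs w) n (candv (Xs w) phi)] =
  [set w | ((forall j, 0 <= fc phi j w) /\ (forall i, (i < n)%N -> ~ forall j, fc phi j w < X i j w))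
     /\ exists i, (i < n)%N /\ (forall j, 0 < X i j w) /\ forall j, fc phi j w <= X i j w].
  apply/seteqP; split => w /=.
    move=> [[HO HN] [i [il [P Q]]]]; split; [split|].
    - by move=> j; rewrite -candE; exact: HO.
    - by move=> k kn H; apply: (HN k kn) => j; rewrite candE XsE; exact: H.
    - exists i; split => //; split => j; have := P j; have := Q j;
        by rewrite candE XsE mxE.
  move=> [[HO HN] [i [il [P Q]]]]; split; [split|].
  - by move=> j; rewrite candE; exact: HO.
  - by move=> k kn H; apply: (HN k kn) => j; rewrite -candE -(XsE w); exact: H.
  - exists i; split => //; split => j; rewrite ?candE XsE ?mxE; [exact: P|exact: Q].
have m1 : measurable [set w | forall j, 0 <= fc phi j w].
  apply: (mset_forallF (fun j => [set w | 0 <= fc phi j w])) => j.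
  by apply: mset_le; [exact: measurable_cst|exact: fc_meas].
have m2 : measurable [set w | forall i, (i < n)%N -> ~ forall j, fc phi j w < X i j w].
  apply: (mset_forallN (fun i => [set w | ~ forall j, fc phi j w < X i j w])) => i.
  apply: (mset_not ([set w | forall j, fc phi j w < X i j w])).
  apply: (mset_forallF (fun j => [set w | fc phi j w < X i j w])) => j.
  by apply: mset_lt; [exact: fc_meas|exact: Xmeas].
have m3 : measurable [set w | exists i, (i < n)%N /\ (forall j, 0 < X i j w) /\ forall j, fc phi j w <= X i j w].
  apply: (mset_existsN (fun i => [set w | (forall j, 0 < X i j w) /\ forall j, fc phi j w <= X i j w])) => i.
  apply: (mset_and ([set w | forall j, 0 < X i j w]) ([set w | forall j, fc phi j w <= X i j w])).
  + apply: (mset_forallF (fun j => [set w | 0 < X i j w])) => j.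
    by apply: mset_lt; [exact: measurable_cst|exact: Xmeas].
  + apply: (mset_forallF (fun j => [set w | fc phi j w <= X i j w])) => j.
    by apply: mset_le; [exact: fc_meas|exact: Xmeas].
exact: (measurableI _ _ (measurableI _ _ m1 m2) m3).
Qed.

Lemma event_meas n c : measurable [set w | Fminus (Xs w) n <= c].
Proof.
have -> : [set w | Fminus (Xs w) n <= c] =
  [set w | (exists phi : {ffun 'I_d -> option 'I_n}, Fchar (Xs w) n (candv (Xs w) phi) /\
       \sum_j fc phi j w <= c)
   \/ ((forall phi : {ffun 'I_d -> option 'I_n}, ~ Fchar (Xs w) n (candv (Xs w) phi)) /\ 0 <= c)].
  have key : forall w (phi : {ffun 'I_d -> option 'I_n}),
      coord_sum (candv (Xs w) phi) = \sum_j fc phi j w.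
    by move=> w phi; rewrite /coord_sum; apply: eq_bigr => j _; rewrite candE.
  apply/seteqP; split => w /=.
    move/Fminus_le => [[phi [F s]]|H]; last by right.
    by left; exists phi; split => //; rewrite -key.
  move=> H; apply/Fminus_le; case: H => [[phi [F s]]|H]; last by right.
  by left; exists phi; split => //; rewrite key.
have m1 : measurable [set w | exists phi : {ffun 'I_d -> option 'I_n}, Fchar (Xs w) n (candv (Xs w) phi) /\
       \sum_j fc phi j w <= c].
  apply: (mset_existsF (fun phi : {ffun 'I_d -> option 'I_n} => [set w | Fchar (Xs w) n (candv (Xs w) phi) /\
       \sum_j fc phi j w <= c])) => phi.
  apply: (measurableI _ _ (Fset_meas n phi)).
  by apply: mset_le; [apply: measurable_sum => j; exact: fc_meas|exact: measurable_cst].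
have m2 : measurable [set w | forall phi : {ffun 'I_d -> option 'I_n}, ~ Fchar (Xs w) n (candv (Xs w) phi)].
  apply: (mset_forallF (fun phi : {ffun 'I_d -> option 'I_n} => [set w | ~ Fchar (Xs w) n (candv (Xs w) phi)])) => phi /=.
  exact: (mset_not _ (Fset_meas n phi)).
have m3 : measurable [set _ : T | 0 <= c].
  case: (pselect (0 <= c)) => h.
    by have -> : [set _ : T | 0 <= c] = setT; [apply/seteqP; split|exact: measurableT].
  by have -> : [set _ : T | 0 <= c] = set0; [apply/seteqP; split|exact: measurable0].
exact: (measurableU _ _ m1 (measurableI _ _ m2 m3)).
Qed.

End EventMeas.

Section Indep.
Context {R : realType} {dT : measure_display} {T : measurableType dT}
  (P : probability T R) {d : nat} (X : nat -> 'I_d -> T -> R).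
Hypothesis Xmeas : forall i j, measurable_fun setT (X i j).
Hypothesis Xexp : forall i j (A : set R), measurable A ->
            P (X i j @^-1` A) = exponential_prob (1 : R) A.
Hypothesis Xindep : mutually_independent P X.

Lemma mpre i j (A : set R) : measurable A -> measurable (X i j @^-1` A).
Proof. by move=> mA; have := Xmeas i j measurableT A mA; rewrite setTI. Qed.

Lemma tail_prob i j t : 0 < t -> P (X i j @^-1` `]t, +oo[) = (expR (- t))%:E.
Proof.
move=> t0.
have -> : X i j @^-1` `]t, +oo[ = ~` (X i j @^-1` `]-oo, 0%R[ `|` X i j @^-1` `[0, t]).
  apply/seteqP; split => w /=; rewrite !in_itv /= andbT.
    by move=> h [|/andP[_ h2]]; lra.
  move=> h; rewrite ltNge; apply/negP => h2; apply: h.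
  by case: (ltP (X i j w) 0) => h3; [left|right; rewrite h2].
rewrite probability_setC; last by apply: measurableU; apply: mpre.
have -> : P (X i j @^-1` `]-oo, 0%R[ `|` X i j @^-1` `[0, t]) =
    (P (X i j @^-1` `]-oo, 0%R[) + P (X i j @^-1` `[0%R, t]))%E.
  apply: measureU; [exact: mpre|exact: mpre|].
  apply/seteqP; split => w //= [] /=; rewrite !in_itv /= => h1 /andP[h2 _]; lra.
rewrite !Xexp // exponential_prob_itv0c //.
have -> : exponential_prob (1 : R) `]-oo, 0%R[ = 0%E.
  apply: integral0_eq => x /=; rewrite in_itv /= => x0.
  by rewrite lt0_exponential_pdf.
by rewrite add0e fin_num_oppeB // addeA subee // add0e mulN1r.
Qed.

Definition Dset (g : 'I_d -> R) i := [set w | forall j, g j < X i j w].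
Definition Zset (g : 'I_d -> R) n := [set w | forall i, (i < n)%N -> ~ Dset g i w].
Definition bigD (g : 'I_d -> R) (S : seq nat) := [set w | forall i, i \in S -> Dset g i w].

Lemma bigsetI_mem (I : eqType) (s : seq I) (F : I -> set T) w :
  (\big[setI/setT]_(k <- s) F k) w <-> forall k, k \in s -> F k w.
Proof.
elim: s => [|a s IH]; first by rewrite big_nil; split.
rewrite big_cons; split.
  move=> [Fa /IH H] k; rewrite inE => /orP[/eqP ->|]//; exact: H.
by move=> H; split; [apply: H; rewrite mem_head|apply/IH => k ks; apply: H; rewrite inE ks orbT].
Qed.

Lemma bigD_prob g (S : seq nat) : (forall j, 0 < g j) -> uniq S ->
  P (bigD g S) = ((\prod_j expR (- g j)) ^+ size S)%:E.
Proof.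
move=> g0 uS.
pose s := [seq (i, j) | i <- S, j <- enum 'I_d].
pose B := fun (i : nat) (j : 'I_d) => `]g j, +oo[%classic : set R.
have us : uniq s by apply: allpairs_uniq => //; [exact: enum_uniq|by move=> [? ?] [? ?]].
have := Xindep s B us (fun i j => measurable_itv _).
have -> : \big[setI/setT]_(k <- s) (X k.1 k.2 @^-1` B k.1 k.2) = bigD g S.
  apply/seteqP; split => w /= H.
    move=> i iS j; have /bigsetI_mem H' := H.
    have := H' (i, j); rewrite /B /= in_itv /= andbT; apply.
    by apply/allpairsP; exists (i, j); rewrite mem_enum.
  apply/bigsetI_mem => -[i j] /allpairsP [[i' j'] /= [iS _ [-> ->]]].
  by rewrite /B /= in_itv /= andbT; apply: H.
move=> ->; rewrite big_allpairs.
under eq_bigr => i _ do under eq_bigr => j _ do rewrite /B tail_prob //.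
rewrite (eq_bigr (fun _ => (\prod_j expR (- g j))%:E)); last first.
  by move=> i _; rewrite prodEFin big_enum.
rewrite prodEFin; congr EFin; elim: (S) => [|a S' IH]; first by rewrite big_nil expr0.
by rewrite big_cons IH exprS.
Qed.


Lemma Dset_meas g i : measurable (Dset g i).
Proof.
apply: (mset_forallF (fun j => [set w | g j < X i j w])) => j.
by apply: mset_lt; [exact: measurable_cst|exact: Xmeas].
Qed.

Lemma Zset_meas g n : measurable (Zset g n).
Proof.
apply: (mset_forallN (fun i => [set w | ~ Dset g i w])) => i.
exact: (mset_not _ (Dset_meas g i)).
Qed.

Lemma bigD_meas g S : measurable (bigD g S).
Proof.
elim: S => [|a S IH].
  by have -> : bigD g [::] = setT; [apply/seteqP; split => w //= _ i|exact: measurableT].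
have -> : bigD g (a :: S) = Dset g a `&` bigD g S.
  apply/seteqP; split => w /=.
    by move=> H; split; [apply: H; rewrite mem_head|move=> i iS; apply: H; rewrite inE iS orbT].
  by move=> [Da H] i; rewrite inE => /orP[/eqP ->|]//; exact: H.
by apply: measurableI; [exact: Dset_meas|exact: IH].
Qed.

Lemma Z_prob g : (forall j, 0 < g j) -> forall n (S : seq nat), uniq S ->
  (forall i, i \in S -> (n <= i)%N) ->
  P (Zset g n `&` bigD g S) =
  ((1 - \prod_j expR (- g j)) ^+ n * (\prod_j expR (- g j)) ^+ size S)%:E.
Proof.
move=> g0; set p := \prod_j expR (- g j).
elim => [|n IH] S uS Sn.
  have -> : Zset g 0 = setT by apply/seteqP; split => w //= _ i.
  by rewrite setTI bigD_prob // expr0 mul1r.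
have nS : n \notin S by apply/negP => /Sn; rewrite ltnn.
have E : Zset g n `&` bigD g S =
   (Zset g n.+1 `&` bigD g S) `|` (Zset g n `&` bigD g (n :: S)).
  apply/seteqP; split => w /=.
    move=> [Zn DS]; case: (pselect (Dset g n w)) => Dn.
      right; split => // i; rewrite inE => /orP[/eqP ->|]//; exact: DS.
    left; split => // i; rewrite ltnS leq_eqVlt => /orP[/eqP ->|]//; exact: Zn.
  case=> [[Zn DS]|[Zn DS]]; split => //.
  - by move=> i il; apply: Zn; apply: ltnW.
  - by move=> i iS; apply: DS; rewrite inE iS orbT.
have disj : (Zset g n.+1 `&` bigD g S) `&` (Zset g n `&` bigD g (n :: S)) = set0.
  apply/seteqP; split => w //= [[Zn _] [_ DS]].
  by apply: (Zn n (ltnSn n)); apply: DS; rewrite mem_head.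
have mA : measurable (Zset g n.+1 `&` bigD g S) by apply: measurableI; [exact: Zset_meas|exact: bigD_meas].
have mB : measurable (Zset g n `&` bigD g (n :: S)) by apply: measurableI; [exact: Zset_meas|exact: bigD_meas].
have H := IH S uS (fun i iS => ltnW (Sn i iS)).
rewrite E in H.
have HU : P ((Zset g n.+1 `&` bigD g S) `|` (Zset g n `&` bigD g (n :: S))) =
  (P (Zset g n.+1 `&` bigD g S) + P (Zset g n `&` bigD g (n :: S)))%E by apply: measureU.
have HB : P (Zset g n `&` bigD g (n :: S)) = ((1 - p) ^+ n * p ^+ size (n :: S))%:E.
  apply: IH; first by rewrite /= nS uS.
  by move=> i; rewrite inE => /orP[/eqP ->|/Sn/ltnW].
rewrite HU HB in H.
have -> : P (Zset g n.+1 `&` bigD g S) =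
  ((P (Zset g n.+1 `&` bigD g S) + ((1 - p) ^+ n * p ^+ size (n :: S))%:E) -
  ((1 - p) ^+ n * p ^+ size (n :: S))%:E)%E by rewrite addeK.
rewrite H -EFinB; congr EFin; rewrite /= !exprS; ring.
Qed.

Lemma Z_bound g n : (forall j, 0 < g j) ->
  (P (Zset g n) <= (expR (- (n%:R * expR (- \sum_j g j))))%:E)%E.
Proof.
move=> g0; have := @Z_prob g g0 n [::] isT (fun i (H : i \in [::]) => ltac:(by [])) .
rewrite (_ : bigD g [::] = setT); last by apply/seteqP; split => w //= _ i.
rewrite setIT => ->; rewrite expr0 mulr1 lee_fin.
rewrite -expR_sum (_ : \sum_j - g j = - \sum_j g j); last by rewrite sumrN.
set q := expR (- \sum_j g j).
have q0 : 0 <= q by exact: expR_ge0.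
have q1 : 1 - q <= expR (- q) by have := expR_ge1Dx (- q); lra.
rewrite -mulrN expRM_natl.
apply: lerXn2r; rewrite ?nnegrE ?expR_ge0 //.
have : q <= 1 by rewrite /q expR_le1 oppr_le0; apply: sumr_ge0 => j _; exact: ltW.
lra.
Qed.

End Indep.

Section Grid.
Variable R : realType.
Variable d' : nat.

Definition cM (c : R) : nat := (Num.trunc (c + 1)).+1.
Definition sk M (k : {ffun 'I_d' -> 'I_M}) : R := \sum_i (k i).+1%:R.
Arguments sk {M} k.
Definition gk (c : R) (k : {ffun 'I_d' -> 'I_(cM c)}) (j : 'I_d'.+1) : R :=
  if unlift ord_max j is Some i then (k i).+1%:R else Num.max 1 (c + 1 + d'%:R - sk k).

Lemma gk_ge1 c k j : 1 <= gk c k j.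
Proof.
rewrite /gk; case: (unlift ord_max j) => [i|]; last by rewrite le_max lexx.
by rewrite ler1n.
Qed.

Lemma widen_lift (i : 'I_d') : widen_ord (leqnSn d') i = lift ord_max i.
Proof. by apply: val_inj; rewrite /= ?lift_max /bump leqNgt ltn_ord. Qed.

Lemma sum_split (F : 'I_d'.+1 -> R) :
  \sum_j F j = \sum_(i < d') F (lift ord_max i) + F ord_max.
Proof. by rewrite big_ord_recr /=; congr (_ + _); apply: eq_bigr => i _; rewrite widen_lift. Qed.

Lemma gk_sum c k : sk k <= c + 1 + d'%:R -> \sum_j gk c k j <= c + d'%:R + 2.
Proof.
move=> hs; rewrite sum_split.
have -> : \sum_(i < d') gk c k (lift ord_max i) = sk k.
  by apply: eq_bigr => i _; rewrite /gk liftK.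
rewrite /gk unlift_none; case: (leP 1 (c + 1 + d'%:R - sk k)) => h; lra.
Qed.

Lemma exists_argmax (Q : nat -> Prop) (f : nat -> R) n :
  (exists i, (i < n)%N /\ Q i) ->
  exists i, (i < n)%N /\ Q i /\ forall k, (k < n)%N -> Q k -> f k <= f i.
Proof.
elim: n => [[i []]//|n IH] H.
case: (pselect (exists i, (i < n)%N /\ Q i)) => [/IH [i [il [Qi Hi]]]|nH].
  case: (pselect (Q n /\ f i < f n)) => [[Qn fin]|K].
    exists n; split => //; split => // k; rewrite ltnS leq_eqVlt => /orP[/eqP ->|kn] Qk //.
    by apply: le_trans (Hi k kn Qk) (ltW fin).
  exists i; split; first by apply: ltnW.
  split => // k; rewrite ltnS leq_eqVlt => /orP[/eqP ->|kn] Qk; last exact: Hi.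
  by rewrite leNgt; apply/negP => fl; apply: K.
have Qn : Q n.
  case: H => i [il Qi]; move: il; rewrite ltnS leq_eqVlt => /orP[/eqP E|il].
    by rewrite -E.
  by case: nH; exists i.
exists n; split => //; split => // k; rewrite ltnS leq_eqVlt => /orP[/eqP ->|kn] Qk //.
by case: nH; exists k.
Qed.

Lemma front_nonempty (Xs : nat -> 'rV[R]_d'.+1) n i : (i < n)%N ->
  strict_dom 0 (Xs i) -> exists x, Fchar Xs n x.
Proof.
move=> il Xi.
have [m [ml [Qm Hm]]] := @exists_argmax (fun i => strict_dom 0 (Xs i))
   (fun i => Xs i ord0 ord0) n (ex_intro _ i (conj il Xi)).
exists (Xs m); split; last by exists m; split => //; split.
split; first by move=> j; apply: ltW; have := Qm j; rewrite mxE.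
move=> k kn XX.
have Qk : strict_dom 0 (Xs k).
  by move=> j; apply: lt_trans (XX j); have := Qm j; rewrite mxE.
have := Hm k kn Qk; have := XX ord0; rewrite /=; lra.
Qed.

Lemma coord_le_sum (x : 'rV[R]_d'.+1) j : @orthant R _ x -> x ord0 j <= coord_sum x.
Proof.
move=> Ox; rewrite /coord_sum (bigD1 j) //= lerDl; apply: sumr_ge0 => k _; exact: Ox.
Qed.

Lemma cover (Xs : nat -> 'rV[R]_d'.+1) n c : 0 <= c -> Fminus Xs n <= c ->
  exists k : {ffun 'I_d' -> 'I_(cM c)}, sk k <= c + 1 + d'%:R /\
    forall i, (i < n)%N -> ~ (forall j, gk c k j < Xs i ord0 j).
Proof.
move=> c0 Fc.
case: (pselect (exists x, Fchar Xs n x)) => [[x0 Fx0]|nF]; last first.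
  exists [ffun => ord0]; split.
    rewrite /sk (eq_bigr (fun _ => 1)); last by move=> i _; rewrite ffunE.
    rewrite sumr_const card_ord; lra.
  move=> i il H; apply: nF; apply: (@front_nonempty Xs n i il) => j.
  by rewrite mxE; apply: lt_trans (H j); apply: (@lt_le_trans _ _ 1) => //; exact: gk_ge1.
set S := [set coord_sum x | x in frontier Xs n].
have : inf S < c + 1 by rewrite /Fminus in Fc; lra.
case/inf_lt; first by exists (coord_sum x0); exists x0 => //; exact/frontierE.
move=> _ [x /frontierE Fx <-] xc.
have [[Ox nX] _] := Fx.
have xc1 : forall j, x ord0 j <= c + 1 by move=> j; apply: le_trans (coord_le_sum x j Ox) (ltW xc).
have kl : forall i : 'I_d', (Num.trunc (x ord0 (lift ord_max i)) < cM c)%N.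
  by move=> i; rewrite ltnS; apply: le_truncn.
pose k := [ffun i => Ordinal (kl i)].
have kE : forall i, ((k i).+1%:R : R) = (Num.trunc (x ord0 (lift ord_max i))).+1%:R.
  by move=> i; rewrite ffunE.
have skx : sk k <= \sum_(i < d') x ord0 (lift ord_max i) + d'%:R.
  rewrite /sk; have -> : (d'%:R : R) = \sum_(i < d') 1 by rewrite sumr_const card_ord.
  rewrite -big_split /=; apply: ler_sum => i _; rewrite kE.
  have := truncn_itv (Ox (lift ord_max i)); rewrite mulrS.
  by case/andP => h _; lra.
have xsum := sum_split (fun j => x ord0 j); rewrite -/(coord_sum x) in xsum.
exists k; split; first by have := Ox ord_max; lra.
move=> i il H; apply: (nX i il) => j.
apply: le_lt_trans (H j); rewrite /gk.
case: (unliftP ord_max j) => [i' ->|->].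
  rewrite kE; have := truncn_itv (Ox (lift ord_max i')).
  by case/andP => _ h; apply: ltW.
rewrite le_max; apply/orP; right; lra.
Qed.

End Grid.
Arguments cM {R} c.
Arguments sk {R d' M} k.
Arguments gk {R d'} c k j.
Arguments cover {R d'} Xs n c.
Arguments gk_sum {R d'} c k.
Arguments gk_ge1 {R d'} c k j.

Section Final.
Context {R : realType} {dT : measure_display} {T : measurableType dT}
  (P : probability T R) (d' : nat) (X : nat -> 'I_d'.+1 -> T -> R).
Hypothesis Xmeas : forall i j, measurable_fun setT (X i j).
Hypothesis Xexp : forall i j (A : set R), measurable A ->
            P (X i j @^-1` A) = exponential_prob (1 : R) A.
Hypothesis Xindep : mutually_independent P X.

Lemma Pbig_le (I : finType) (C : pred I) (F : I -> set T) :
  (forall i, measurable (F i)) ->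
  measurable (\big[setU/set0]_(i | C i) F i) /\
  (P (\big[setU/set0]_(i | C i) F i) <= \sum_(i | C i) P (F i))%E.
Proof.
move=> mF.
apply: (big_ind2 (fun A y => measurable A /\ (P A <= y)%E)).
- by split; [exact: measurable0|rewrite measure0].
- move=> A1 y1 A2 y2 [m1 h1] [m2 h2]; split; first exact: measurableU.
  apply: le_trans (measureU2 P m1 m2) _; exact: leeD.
- by move=> i _; split.
Qed.

Lemma prob_bound n c : 0 <= c ->
  (P [set w | (Fminus (rvec X ^~ w) n <= c)%R] <=
   (((cM c)%:R ^+ d') * expR (- (n%:R * expR (- (c + d'%:R + 2)))))%:E)%E.
Proof.
move=> c0.
pose U := \big[setU/set0]_(k : {ffun 'I_d' -> 'I_(cM c)} | sk k <= c + 1 + d'%:R)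
   Zset X (gk c k) n.
have [mU PU] := Pbig_le _ (fun k : {ffun 'I_d' -> 'I_(cM c)} => sk k <= c + 1 + d'%:R)
   (fun k => Zset X (gk c k) n) (fun k => Zset_meas _ Xmeas _ _).
have sub : [set w | (Fminus (rvec X ^~ w) n <= c)%R] `<=` U.
  move=> w /= Fw; have [k [sk1 H]] := cover _ _ _ c0 Fw.
  rewrite /U (bigD1 k) //=; left => i il Di; apply: (H i il) => j.
  by rewrite XsE; exact: Di.
have mE : measurable [set w | (Fminus (rvec X ^~ w) n <= c)%R] := event_meas _ Xmeas n c.
apply: le_trans (le_measure P (mem_set mE) (mem_set mU) sub) _.
apply: le_trans PU _.
set B := expR (- (n%:R * expR (- (c + d'%:R + 2)))).
apply: (@le_trans _ _ (\sum_(k : {ffun 'I_d' -> 'I_(cM c)} | (sk k <= c + 1 + d'%:R)%R) B%:E)%E).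
  apply: lee_sum => k hk.
  apply: le_trans (Z_bound P X Xmeas Xexp Xindep (gk c k) n (fun j => lt_le_trans ltr01 (gk_ge1 c k j))) _.
  rewrite lee_fin ler_expR lerN2; apply: ler_wpM2l => //.
  rewrite ler_expR lerN2; exact: gk_sum.
rewrite sumEFin lee_fin.
apply: (@le_trans _ _ (\sum_(k : {ffun 'I_d' -> 'I_(cM c)}) B)).
  rewrite [X in _ <= X](bigID (fun k : {ffun 'I_d' -> 'I_(cM c)} => sk k <= c + 1 + d'%:R)) /= lerDl.
  by apply: sumr_ge0 => k _; exact: expR_ge0.
by rewrite sumr_const card_ffun !card_ord -[B *+ _]mulr_natr natrX mulrC.
Qed.

End Final.

Lemma final_ineq {R : realType} (d' : nat) (nr L b : R) : 0 < nr -> L = ln nr -> 0 <= b ->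
  b < L -> 2 * d'%:R + 6 <= L - b ->
  (cM b)%:R ^+ d' * expR (- (nr * expR (- (b + d'%:R + 2)))) <=
  L ^+ d' * expR (- expR ((1 + 0) * 2^-1 * (L - b))).
Proof.
move=> n0 hL b0 bL ha.
have d0 : (0 : R) <= d'%:R := ler0n _ _.
have hM : (cM b)%:R <= 2 * L.
  rewrite /cM -natr1.
  have h := truncn_le (b + 1); have h' : 0 <= b + 1 by lra.
  rewrite h' in h.
  lra.
have hM0 : 0 <= ((cM b)%:R : R) by [].
have L0 : 0 <= L by lra.
have e1 : nr * expR (- (b + d'%:R + 2)) = expR (L - b - d'%:R - 2).
  rewrite (_ : L - b - d'%:R - 2 = ln nr + (- (b + d'%:R + 2))); last by rewrite hL; lra.
  by rewrite expRD lnK // posrE.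
rewrite e1 addr0 mul1r.
set a := L - b. have ha' : 2 * d'%:R + 6 <= a by [].
set E2 := expR (2^-1 * a).
have E1E : expR (a - d'%:R - 2) = E2 * expR (2^-1 * a - d'%:R - 2).
  by rewrite /E2 -expRD; congr expR; lra.
have t2 : 2 <= expR (2^-1 * a - d'%:R - 2).
  have := expR_ge1Dx (2^-1 * a - d'%:R - 2); lra.
have E2ge : d'%:R + 4 <= E2 by have := expR_ge1Dx (2^-1 * a); rewrite -/E2; lra.
have key : d'%:R - expR (a - d'%:R - 2) <= - E2 by rewrite E1E; nra.
have pow2 : (2 : R) ^+ d' <= expR d'%:R.
  rewrite -[X in expR X]mulr1 expRM_natl; apply: lerXn2r; rewrite ?nnegrE ?expR_ge0 //.
  by have := expR_ge1Dx (1 : R); lra.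
apply: (@le_trans _ _ ((2 * L) ^+ d' * expR (- expR (a - d'%:R - 2)))).
  apply: ler_wpM2r; first exact: expR_ge0.
  by apply: lerXn2r; rewrite ?nnegrE //; lra.
rewrite exprMn [2 ^+ d' * _]mulrC -mulrA; apply: ler_wpM2l; first exact: exprn_ge0.
apply: (@le_trans _ _ (expR d'%:R * expR (- expR (a - d'%:R - 2)))).
  by apply: ler_wpM2r; [exact: expR_ge0|exact: pow2].
by rewrite -expRD ler_expR; lra.
Qed.

Theorem proposition3p2 (R : realType) (dT : measure_display)
  (T : measurableType dT) (P : probability T R) (d : nat) (hd : (1 <= d)%N)
  (X : nat -> 'I_d -> T -> R)
  (Xmeas : forall i j, measurable_fun setT (X i j))
  (Xexp : forall i j (A : set R), measurable A ->
            P (X i j @^-1` A) = exponential_prob (1 : R) A)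
  (Xindep : mutually_independent P X)
  (b : nat -> R)
  (hb : \forall n \near \oo, 0 <= b n /\ b n < ln (n%:R : R))
  (hb1 : (fun n => b n / ln (n%:R : R)) @ \oo --> (1 : R))
  (hb2 : (fun n => ln (n%:R : R) - b n) @ \oo --> +oo) :
  exists eps : nat -> R, eps @ \oo --> (0 : R) /\
    \forall n \near \oo,
      (P [set w | (Fminus (rvec X ^~ w) n <= b n)%R] <=
       ((ln (n%:R : R)) ^+ d.-1 *
        expR (- expR ((1 + eps n) * 2^-1 * (ln (n%:R : R) - b n))))%:E)%E.
Proof.
case: d hd X Xmeas Xexp Xindep => [//|d'] _ X Xmeas Xexp Xindep.
exists (fun=> 0); split; first exact: cvg_cst.
have hb3 : \forall n \near \oo, 2 * d'%:R + 6 <= ln (n%:R : R) - b n.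
  by move/cvgryPge : hb2; apply.
near=> n.
have [b0 bL] : 0 <= b n /\ b n < ln (n%:R : R) by near: n; exact: hb.
have ha : 2 * d'%:R + 6 <= ln (n%:R : R) - b n by near: n; exact: hb3.
have n0 : (0 : R) < n%:R.
  rewrite ltNge; apply/negP => h; move: bL ha; rewrite ln0 //; lra.
apply: le_trans (@prob_bound _ _ _ P d' X Xmeas Xexp Xindep n (b n) b0) _.
rewrite lee_fin /=; exact: final_ineq.
Unshelve. all: by end_near.
Qed.
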